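(* Let $G$ and $H$ be finite graphs such that $G$ does not contain $H$ as a minor, let $k\ge 1$ be an integer, and let $J$ be the $k$-subdivision of $H$. If $f$ is an embedding of the shortest-path metric of $J$ into the shortest-path metric of $G$, then the distortion of $f$ is at least $k/6-1/2$.
   Context: All graphs carry their shortest-path metric with every edge of length $1$. The $k$-subdivision of a graph $H$ is the graph obtained by replacing each edge of $H$ by a path of length $k$. For metric spaces $(X,\nu)$, $(Y,\mu)$ and an injective map $\Phi:X\to Y$, the distortion of $\Phi$ is $\|\Phi\|\cdot\|\Phi^{-1}\|$, where $\|\Phi\|=\max_{x\neq y}\mu(\Phi(x),\Phi(y))/\nu(x,y)$ and $\|\Phi^{-1}\|=\max_{x\neq y}\nu(x,y)/\mu(\Phi(x),\Phi(y))$. *)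

(* Defs.v *)
From HB Require Import structures.
From mathcomp Require Import all_boot all_order all_algebra.
Set Implicit Arguments. Unset Strict Implicit. Unset Printing Implicit Defensive.
Import Order.TTheory GRing.Theory Num.Theory.

Record sgraph := SGraph {
  vertex :> finType;
  adj : rel vertex;
  adj_sym : symmetric adj;
  adj_irr : irreflexive adj }.

Section Graphs.
Variable G : sgraph.

Definition gconnected : Prop := forall x y : G, connect (@adj G) x y.

Definition walk_len (x y : G) (n : nat) : bool :=
  [exists p : n.-tuple (vertex G), path (@adj G) x p && (last x p == y)].

Lemma dist_ex (x y : G) :
  exists n, walk_len x y n || ~~ connect (@adj G) x y.
Proof.
case: (boolP (connect (@adj G) x y)) => [/connectP [p pth ->]|_];
  last by exists 0; rewrite orbT.
exists (size p); apply/orP; left; apply/existsP; exists (in_tuple p : (size p).-tuple (vertex G)).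
by rewrite /= pth eqxx.
Qed.

(* shortest-path distance (length of a shortest walk); 0 if disconnected,
   which never happens for the connected graphs used below *)
Definition gdist (x y : G) : nat := ex_minn (dist_ex x y).

Definition induced (S : {set G}) : rel G :=
  fun a b => [&& @adj G a b, a \in S & b \in S].
End Graphs.

Definition minor_of (H G : sgraph) : Prop :=
  exists phi : H -> {set G},
    [/\ forall u, phi u != set0,
        forall u v, u != v -> [disjoint phi u & phi v],
        forall u x y, x \in phi u -> y \in phi u -> connect (induced (phi u)) x y
      & forall u v, @adj H u v ->
          exists x y, [/\ x \in phi u, y \in phi v & @adj G x y]].

Section Subdivision.
Variables (H : sgraph) (k : nat).

Definition sedge := {p : H * H | @adj H p.1 p.2 && (enum_rank p.1 < enum_rank p.2)%N}.

(* vertices: original vertices, plus k-1 interior vertices (e, i), i < k-1,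
   on the edge e; (e, i) sits at distance i+1 from (val e).1 along the path *)
Definition svert : finType := (H + (sedge * 'I_k.-1))%type.

Definition sub_r (x y : svert) : bool :=
  match x, y with
  | inl u, inl v => (k == 1)%N && @adj H u v
  | inl u, inr (e, i) =>
      ((u == (val e).1) && (i == 0%N :> nat)) ||
      ((u == (val e).2) && (i == (k - 2)%N :> nat))
  | inr (e, i), inr (e', j) => (e == e') && (i.+1 == j :> nat)
  | _, _ => false
  end.

Definition sub_adj : rel svert := fun x y => (x != y) && (sub_r x y || sub_r y x).

Lemma sub_adj_sym : symmetric sub_adj.
Proof. by move=> x y; rewrite /sub_adj eq_sym orbC. Qed.

Lemma sub_adj_irr : irreflexive sub_adj.
Proof. by move=> x; rewrite /sub_adj eqxx. Qed.

Definition subdivision : sgraph := SGraph sub_adj_sym sub_adj_irr.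
End Subdivision.

Local Open Scope ring_scope.

Definition expansion (R : realFieldType) (X Y : sgraph) (f : X -> Y) : R :=
  \big[Num.max/0]_(p : X * X | p.1 != p.2)
     ((gdist (f p.1) (f p.2))%:R / (gdist p.1 p.2)%:R).

Definition contraction (R : realFieldType) (X Y : sgraph) (f : X -> Y) : R :=
  \big[Num.max/0]_(p : X * X | p.1 != p.2)
     ((gdist p.1 p.2)%:R / (gdist (f p.1) (f p.2))%:R).

Definition distortion (R : realFieldType) (X Y : sgraph) (f : X -> Y) : R :=
  expansion R f * contraction R f.

(* Main.v *)
Require Import Defs.
From mathcomp Require Import all_boot all_order all_algebra.
From mathcomp Require Import lra zify.
Import Order.TTheory GRing.Theory Num.Theory.
Set Implicit Arguments. Unset Strict Implicit. Unset Printing Implicit Defensive.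

Section GraphLemmas.
Variable G : sgraph.
Implicit Types x y z : G.

Definition within x y n := exists s : seq G,
  [&& path (@adj G) x s, last x s == y & (size s <= n)%N].

Lemma within_gdist x y n : within x y n -> (gdist x y <= n)%N.
Proof.
case=> s /and3P[ps ls sz]; rewrite /gdist; case: ex_minnP => m _ min.
apply: leq_trans sz; apply: min; apply/orP; left; apply/existsP.
by exists (in_tuple s); rewrite /= ps.
Qed.

Lemma gdist_within x y : connect (@adj G) x y -> within x y (gdist x y).
Proof.
move=> c; rewrite /gdist; case: ex_minnP => m + _; rewrite c orbF.
by case/existsP=> p /andP[ps ls]; exists (tval p); rewrite ps ls size_tuple /=.
Qed.

Lemma within_refl x : within x x 0.
Proof. by exists [::]; rewrite /= eqxx. Qed.

Lemma within_mono x y a b : (a <= b)%N -> within x y a -> within x y b.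
Proof. by move=> ab [s /and3P[p l s1]]; exists s; rewrite p l (leq_trans s1). Qed.

Lemma within_trans x y z a b : within x y a -> within y z b -> within x z (a + b).
Proof.
case=> s /and3P[p1 /eqP l1 s1] [t /and3P[p2 l2 s2]].
exists (s ++ t); rewrite cat_path p1 last_cat l1 p2 l2 size_cat /=.
exact: leq_add.
Qed.

Lemma within_adj x y : @adj G x y -> within x y 1.
Proof. by move=> a; exists [:: y]; rewrite /= a eqxx. Qed.

Lemma within_sym x y n : within x y n -> within y x n.
Proof.
case=> s; elim: s x n => [|z s IH] x n.
  by case/and3P=> _ /eqP /= -> _; apply: within_mono (within_refl y).
case/and3P=> /= /andP[a p] l sz.
have := IH z (size s); rewrite p l leqnn => /(_ isT) h.
have W := within_mono (x:=y) (y:=x) sz; apply: W; rewrite -addn1.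
have a' : adj z x by rewrite adj_sym.
exact: (within_trans h (within_adj a')).
Qed.

Lemma within_mem x s g : path (@adj G) x s -> g \in x :: s -> within x g (size s).
Proof.
elim: s x => [|z s IH] x /=.
  by move=> _; rewrite inE => /eqP ->; apply: within_refl.
case/andP=> a p; rewrite inE => /orP[/eqP ->|gi].
  by apply: within_mono (within_refl x).
rewrite -add1n; apply: within_trans (within_adj a) (IH _ p gi).
Qed.

Lemma gdist0 x y : connect (@adj G) x y -> gdist x y = 0 -> x = y.
Proof.
move=> c h; have := gdist_within c; rewrite h.
by case=> -[|? ?] /and3P[_ /eqP]. 
Qed.

Lemma gdist_adj x y : @adj G x y -> (gdist x y <= 1)%N.
Proof. by move=> a; apply: within_gdist (within_adj a). Qed.

Lemma induced_sym (S : {set G}) : symmetric (induced S).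
Proof. by move=> a b; rewrite /induced adj_sym; case: (a \in S); case: (b \in S); rewrite ?andbT ?andbF. Qed.

Lemma path_induced (S : {set G}) x s : path (@adj G) x s ->
  all (fun g => g \in S) (x :: s) ->
  forall a b, a \in x :: s -> b \in x :: s -> connect (induced S) a b.
Proof.
move=> p al.
have pi : path (induced S) x s.
  elim: s x p al => [|z s IH] x; first by [].
  move=> /= /andP[a p] /and3P[xS zS al].
  by rewrite /induced a xS zS /= IH //= zS.
move=> a b ai bi; apply: (connect_trans _ (@path_connect _ _ _ _ pi b bi)).
by rewrite (sym_connect_sym (@induced_sym S)); exact: (@path_connect _ _ _ _ pi a ai).
Qed.

End GraphLemmas.

Section Sub.
Variables (H : sgraph) (k : nat).
Notation J := (subdivision H k).

Definition phiv (a : H) (x : J) : nat :=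
  match x with
  | inl w => if w == a then 0 else k
  | inr (e, i) => if (val e).1 == a then i.+1
                  else if (val e).2 == a then k.-1 - i else k
  end.

Lemma sedge_neq (e : sedge H) : (val e).1 != (val e).2.
Proof.
case/andP: (valP e) => ad _; apply/eqP => h; move: ad; rewrite h.
by rewrite adj_irr.
Qed.

Lemma phi_lip_r a (x y : J) : sub_r x y ->
  (phiv a y <= (phiv a x).+1) && (phiv a x <= (phiv a y).+1).
Proof.
move: x y => [u|[e i]] [v|[e' j]] //=.
- case/andP=> /eqP k1 _; rewrite k1.
  by case: (u == a); case: (v == a).
- have ne := sedge_neq e'.
  move: (ltn_ord j) ne; case: e' => [[e1 e2] /= _] jk ne.
  case/orP=> /andP[/eqP ue /eqP je]; rewrite ue;
  case: (e1 =P a) => [ea|_]; case: (e2 =P a) => [eb|_];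
  try (by move: ne; rewrite ea eb eqxx); simpl; lia.
- case/andP=> /eqP ee /eqP ij; rewrite -ee; move: (ltn_ord j) => jk.
  case: ((sval e).1 == a); case: ((sval e).2 == a); simpl; lia.
Qed.

Lemma phi_lip a (x y : J) : sub_adj x y -> (phiv a y <= (phiv a x).+1).
Proof.
case/andP=> _ /orP[/(phi_lip_r a)|/(phi_lip_r a)] /andP[] //.
Qed.

Lemma phi_path a (x : J) s : path (@sub_adj H k) x s ->
  (phiv a (last x s) <= phiv a x + size s).
Proof.
elim: s x => [|z s IH] x /=; first by rewrite addn0.
case/andP=> ad p; have := IH _ p; move: (phi_lip a ad) => h1 h2; apply: (leq_trans h2); by rewrite addnS -addSn leq_add2r.
Qed.


Definition pt (e : sedge H) (p : nat) : J :=
  if p is 0 then inl (val e).1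
  else if (insub p.-1 : option 'I_k.-1) is Some i then inr (e, i)
  else inl (val e).2.

Lemma pt0 e : pt e 0 = inl (val e).1. Proof. by []. Qed.

Lemma ptS e p : p.+1 < k -> exists i : 'I_k.-1, pt e p.+1 = inr (e, i) /\ nat_of_ord i = p.
Proof.
move=> h; rewrite /=; case: insubP => [i _ vi|]; first by exists i.
by rewrite -ltnS -(ltn_predK h) /= ltnS => /negP; rewrite ltn_predRL h.
Qed.

Lemma ptk' e p : p.+1 = k -> pt e p.+1 = inl (val e).2.
Proof.
move=> h /=; case: insubP => // i /= H1 _; exfalso; move: H1.
by rewrite -h ltnn.
Qed.

Lemma ptk e : (0 < k)%N -> pt e k = inl (val e).2.
Proof. move=> k0; have := ptk' e (prednK k0); by rewrite (prednK k0). Qed.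

Lemma pt_inr e (i : 'I_k.-1) : pt e i.+1 = inr (e, i).
Proof.
rewrite /=; case: insubP => [j _ vj|]; first by congr (inr (_, _)); apply: val_inj.
by rewrite ltn_ord.
Qed.

Lemma pt_cases e p : p <= k ->
  [\/ p = 0 /\ pt e p = inl (val e).1,
      exists i : 'I_k.-1, [/\ 0 < p, p < k, pt e p = inr (e, i) & nat_of_ord i = p.-1]
    | p = k /\ pt e p = inl (val e).2].
Proof.
case: p => [|p] pk; first by constructor 1.
case: (ltnP p.+1 k) => h.
  by have [i [-> vi]] := ptS e h; constructor 2; exists i; split.
have e1 : p.+1 = k by lia.
by constructor 3; split => //; rewrite ptk'.
Qed.

Lemma eqxx' (T : eqType) (x : T) : (x == x) = true. Proof. exact: eqxx. Qed.

Lemma phi_pt1 e p : p <= k -> phiv (val e).1 (pt e p) = p.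
Proof.
have ne := sedge_neq e.
move=> pk; case: (pt_cases e pk) => [[-> ->]|[i [p0 pk' -> vi]]|[-> ->]] /=.
- by case: eqP.
- by case: eqP => // _; lia.
- by rewrite eq_sym (negbTE ne).
Qed.

Lemma phi_pt2 e p : p <= k -> phiv (val e).2 (pt e p) = k - p.
Proof.
have ne := sedge_neq e.
move=> pk; case: (pt_cases e pk) => [[-> ->]|[i [p0 pk' -> vi]]|[-> ->]] /=.
- by rewrite (negbTE ne) subn0.
- rewrite (negbTE ne); case: eqP => // _; lia.
- by case: eqP => // _; rewrite subnn.
Qed.

Lemma phi_ptn a e p : a != (val e).1 -> a != (val e).2 -> phiv a (pt e p) = k.
Proof.
move=> n1 n2; rewrite /pt; case: p => [|p] /=; first by rewrite eq_sym (negbTE n1).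
case: (insub p) => [i|] /=; first by rewrite eq_sym (negbTE n1) eq_sym (negbTE n2).
by rewrite eq_sym (negbTE n2).
Qed.

Lemma phi_sum a b (x : J) : a != b -> k <= phiv a x + phiv b x.
Proof.
move=> ab; case: x => [w|[e i]] /=.
  case: (w =P a) => [wa|_]; case: (w =P b) => [wb|_]; try lia.
  by move: ab; rewrite -wa -wb eqxx.
have ne := sedge_neq e; move: (ltn_ord i) => ik.
case: e ne => [[e1 e2] /= _] ne.
case: (e1 =P a) => [ea|na]; case: (e1 =P b) => [eb|nb];
case: (e2 =P a) => [ea'|na']; case: (e2 =P b) => [eb'|nb']; simpl; try lia.
all: try by move: ab; rewrite -?ea -?eb -?ea' -?eb' eqxx.
all: by move: ne; rewrite ?ea ?eb ?ea' ?eb' eqxx.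
Qed.

Lemma pt_adj e p : p < k -> sub_adj (pt e p) (pt e p.+1).
Proof.
move=> pk; have ne := sedge_neq e.
case: p pk => [|p] pk.
  case: (ltnP 1 k) => k1.
    have [i [-> vi]] := ptS e k1.
    by rewrite /sub_adj /= eqxx vi eqxx.
  have k1' : k = 1 by lia.
  rewrite pt0 ptk'; last by rewrite k1'.
  rewrite /sub_adj /= k1' eqxx /=.
  case/andP: (valP e) => -> _; rewrite orTb andbT.
  by apply/eqP => -[h]; move: ne; rewrite h eqxx.
have [i [-> vi]] := ptS e pk.
case: (ltnP p.+2 k) => k2.
  have [j [-> vj]] := ptS e k2.
  rewrite /sub_adj /= eqxx /= vi vj eqxx /= andbT.
  apply/eqP => -[h]; move: vi vj; rewrite h; lia.
have -> : p.+2 = k by lia.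
rewrite ptk; last lia.
rewrite /sub_adj /= eqxx vi /=.
have -> : (p == k - 2) by apply/eqP; lia.
by rewrite orbT.
Qed.

Lemma conn_pt e p : p <= k -> connect (@sub_adj H k) (pt e 0) (pt e p).
Proof.
elim: p => [|p IH] pk; first exact: connect0.
apply: (connect_trans (IH (ltnW pk))); apply: connect1; exact: pt_adj.
Qed.

Lemma edge_of (u v : H) : adj u v -> exists e : sedge H,
  ((val e).1 == u) && ((val e).2 == v) || ((val e).1 == v) && ((val e).2 == u).
Proof.
move=> a; case: (ltngtP (enum_rank u) (enum_rank v)) => h.
- have P : adj (u, v).1 (u, v).2 && (enum_rank (u, v).1 < enum_rank (u, v).2) by rewrite /= a h.
  by exists (exist _ (u, v) P); rewrite /= !eqxx.
- have P : adj (v, u).1 (v, u).2 && (enum_rank (v, u).1 < enum_rank (v, u).2).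
    by rewrite /= adj_sym a h.
  by exists (exist _ (v, u) P); rewrite /= !eqxx orbT.
- by move: a; rewrite (enum_rank_inj (val_inj h)) adj_irr.
Qed.

Lemma J_conn : (0 < k)%N -> gconnected H -> forall x y : J, connect (@sub_adj H k) x y.
Proof.
move=> k0 hH.
have sym := sym_connect_sym (@sub_adj_sym H k).
have ee : forall u v, adj u v -> connect (@sub_adj H k) (inl u) (inl v).
  move=> u v /edge_of [e /orP[]/andP[/eqP e1 /eqP e2]];
    have := conn_pt e (leqnn k); rewrite pt0 ptk // e1 e2 //.
  by rewrite sym.
have hl : forall u v, connect (@sub_adj H k) (inl u) (inl v).
  move=> u v; case/connectP: (hH u v) => p; elim: p u => [|w p IH] u /=.
    by move=> _ ->; exact: connect0.
  by case/andP=> a pth l; apply: connect_trans (ee _ _ a) (IH _ pth l).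
have hr : forall x : J, exists u, connect (@sub_adj H k) (inl u) x.
  case=> [u|[e i]]; first by exists u; exact: connect0.
  exists (val e).1; rewrite -pt_inr -pt0; apply: conn_pt; move: (ltn_ord i); lia.
move=> x y; have [u cu] := hr x; have [v cv] := hr y.
rewrite sym in cu; exact: connect_trans (connect_trans cu (hl u v)) cv.
Qed.

End Sub.

Lemma find_take_adj (T : eqType) (r : rel T) (a : pred T) x s :
  path r x s -> ~~ a x -> has a s ->
  exists g h, [/\ g \in take (find a (x :: s)) (x :: s), a h & r g h].
Proof.
elim: s x => [|z s IH] x //= /andP[rxz p] ax.
rewrite (negbTE ax); case az: (a z) => /= hs.
  by exists x, z; rewrite /= az inE eqxx.
have [g [h [gi ah rgh]]] := IH z p (negbT az) hs.
exists g, h; split => //; rewrite inE; apply/orP; right.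
by move: gi; rewrite /= az.
Qed.

Lemma take_before_find (T : eqType) (a : pred T) s g :
  g \in take (find a s) s -> ~~ a g.
Proof.
elim: s => [|z s IH] //=; case az: (a z) => //=.
by rewrite inE => /orP[/eqP ->|/IH]; rewrite ?az.
Qed.

Lemma path_take (T : Type) (r : rel T) x s n : path r x s -> path r x (take n s).
Proof.
elim: s x n => [|z s IH] x [|n] //= /andP[-> p] /=; exact: IH.
Qed.

Local Open Scope ring_scope.

Section Main.
Variables (R : realFieldType) (G H : sgraph) (k : nat).
Hypotheses (hG : gconnected G) (hH : gconnected H) (hk : (0 < k)%N).
Variable f : subdivision H k -> G.
Hypothesis finj : injective f.
Local Notation J := (subdivision H k).
Local Notation al := (expansion R f).
Local Notation be := (contraction R f).

Lemma al_ge0 : 0 <= al.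
Proof. exact: bigmax_ge_id. Qed.

Lemma be_ge0 : 0 <= be.
Proof. exact: bigmax_ge_id. Qed.

Lemma exp_adj (x y : J) : sub_adj x y -> (gdist (f x) (f y))%:R <= al.
Proof.
move=> a; have xy : x != y by case/andP: a.
have d1 : gdist x y = 1%N.
  apply/eqP; rewrite eqn_leq gdist_adj //= lt0n; apply/eqP => /gdist0 h.
  by move: xy; rewrite h ?eqxx //; exact: connect1.
rewrite /expansion (bigmaxD1 (x, y)) //= le_max d1 divr1 lexx //.
Qed.

Lemma con (y y' : J) : y != y' ->
  (gdist y y')%:R <= be * (gdist (f y) (f y'))%:R.
Proof.
move=> ne; have dpos : (0 < gdist (f y) (f y'))%N.
  rewrite lt0n; apply/eqP => /(gdist0 (hG _ _)) /finj h.
  by move: ne; rewrite h eqxx.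
rewrite -ler_pdivrMr ?ltr0n // /contraction (bigmaxD1 (y, y')) //= le_max lexx //.
Qed.

Lemma gap_lemma (y y' : J) (g : G) (d1 d2 gap : nat) (a : H) :
  within (f y) g d1 -> within (f y') g d2 -> d1%:R <= al -> d2%:R <= al ->
  (phiv a y + gap <= phiv a y')%N -> gap%:R <= 2 * (al * be).
Proof.
move=> w1 w2 h1 h2 hp.
have be0 := be_ge0; have al0 := al_ge0.
case: (y =P y') => [e|ne].
  have -> : gap = 0%N by move: hp; rewrite e; lia.
  by rewrite mulr_ge0 // mulr_ge0.
have dJ : (gap <= gdist y y')%N.
  have [s /and3P[ps /eqP ls sz]] := gdist_within (J_conn hk hH y y').
  have := phi_path a ps; rewrite ls => h.
  rewrite -(leq_add2l (phiv a y)); apply: leq_trans hp _; apply: leq_trans h _.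
  by rewrite leq_add2l.
have dG : (gdist (f y) (f y') <= d1 + d2)%N.
  exact: within_gdist (within_trans w1 (within_sym w2)).
apply: (@le_trans _ _ (gdist y y')%:R); first by rewrite ler_nat.
apply: le_trans (con (introN eqP ne)) _.
have : (gdist (f y) (f y'))%:R <= (d1 + d2)%:R :> R by rewrite ler_nat.
rewrite natrD => h3; nra.
Qed.


Definition mm := (k %/ 3)%N.
Hypothesis hm1 : (0 < mm)%N.
Hypothesis hsmall : 2 * (al * be) < (minn (k - 2 * mm) mm.+1)%:R.

Lemma m3 : (3 * mm <= k)%N.
Proof. rewrite /mm; lia. Qed.

Lemma mk : (mm < k)%N.
Proof. rewrite /mm; lia. Qed.

Lemma gap_false (y y' : J) (g : G) (d1 d2 gap : nat) (a : H) :
  within (f y) g d1 -> within (f y') g d2 -> d1%:R <= al -> d2%:R <= al ->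
  (phiv a y + gap <= phiv a y')%N -> (minn (k - 2 * mm) mm.+1 <= gap)%N -> False.
Proof.
move=> w1 w2 h1 h2 hp hg; have := gap_lemma w1 w2 h1 h2 hp.
have : (minn (k - 2 * mm) mm.+1)%:R <= gap%:R :> R by rewrite ler_nat.
move: hsmall; lra.
Qed.

Definition spP (a b : G) := fun s : seq G =>
  [&& path (@adj G) a s, last a s == b & (size s <= gdist a b)%N].
Lemma sp_ex a b : exists s, spP a b s.
Proof. exact: gdist_within (hG a b). Qed.
Definition sp a b := xchoose (sp_ex a b).
Lemma sp_spec a b : spP a b (sp a b).
Proof. exact: xchooseP. Qed.

Definition fp e p := f (pt k e p).
Definition seg e p : seq G := fp e p :: sp (fp e p) (fp e p.+1).

Lemma seg_within e p g : (p < k)%N -> g \in seg e p ->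
  exists d, within (fp e p) g d /\ d%:R <= al.
Proof.
move=> pk gi; case/and3P: (sp_spec (fp e p) (fp e p.+1)) => ps _ sz.
exists (size (sp (fp e p) (fp e p.+1))); split; first exact: within_mem ps gi.
apply: le_trans (exp_adj (pt_adj e pk)); by rewrite ler_nat.
Qed.

Fixpoint Wr e lo n : seq G :=
  if n is n'.+1 then Wr e lo n' ++ sp (fp e (lo + n')) (fp e (lo + n').+1) else [::].

Lemma Wr_path e lo n : path (@adj G) (fp e lo) (Wr e lo n) &&
  (last (fp e lo) (Wr e lo n) == fp e (lo + n)).
Proof.
elim: n => [|n IH] /=; first by rewrite addn0 eqxx.
case/andP: IH => p /eqP l.
case/and3P: (sp_spec (fp e (lo + n)) (fp e (lo + n).+1)) => ps /eqP ls _.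
by rewrite cat_path p l ps last_cat l ls addnS eqxx.
Qed.

Lemma Wr_mem e lo n g : (0 < n)%N -> g \in fp e lo :: Wr e lo n ->
  exists j, (j < n)%N /\ g \in seg e (lo + j).
Proof.
move=> n0; elim: n n0 => [|n IH] // _.
rewrite /= -cat_cons mem_cat => /orP[gi|gi].
  case: n IH gi => [|n] IH gi.
    by exists 0%N; move: gi; rewrite /= !inE addn0 => ->.
  by have [j [jn gj]] := IH isT gi; exists j; split => //; apply: ltnW.
by exists n; split => //; rewrite /seg inE gi orbT.
Qed.

Lemma Wr_prefix e lo n j : (j <= n)%N -> exists t, Wr e lo n = Wr e lo j ++ t.
Proof.
elim: n => [|n IH] jn; first by exists [::]; move: jn; rewrite leqn0 => /eqP ->.
case: (ltngtP j n.+1) jn => // h _.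
  have [t Ht] := IH h; exists (t ++ sp (fp e (lo + n)) (fp e (lo + n).+1)).
  by rewrite /= Ht catA.
by rewrite h; exists [::]; rewrite cats0.
Qed.

Lemma Wr_sub e lo n j g : (j < n)%N -> g \in seg e (lo + j) ->
  g \in fp e lo :: Wr e lo n.
Proof.
move=> jn; rewrite /seg inE => /orP[/eqP ->|gi].
  have [t ->] := Wr_prefix e lo (ltnW jn).
  rewrite -cat_cons mem_cat; apply/orP; left.
  case/andP: (Wr_path e lo j) => _ /eqP <-; exact: mem_last.
have [t ->] := Wr_prefix e lo jn.
rewrite -cat_cons mem_cat; apply/orP; left; by rewrite /= inE mem_cat gi !orbT.
Qed.

Lemma Wr_last e lo n : fp e (lo + n) \in fp e lo :: Wr e lo n.
Proof. case/andP: (Wr_path e lo n) => _ /eqP <-; exact: mem_last. Qed.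

Definition near (u : H) (e : sedge H) (p : nat) :=
  ((val e).1 == u) && (p.+1 <= mm)%N || ((val e).2 == u) && (k - mm <= p)%N.

Definition C (u : H) : {set G} :=
  f (inl u) |: \bigcup_(e : sedge H) \bigcup_(p : 'I_k | near u e p) [set g in seg e p].

Lemma C_in u e p g : (p < k)%N -> near u e p -> g \in seg e p -> g \in C u.
Proof.
move=> pk np gi; apply/setU1P; right; apply/bigcupP; exists e => //.
apply/bigcupP; exists (Ordinal pk) => //; by rewrite inE.
Qed.

Definition Wf e := fp e 0 :: Wr e 0 k.
Definition tt e := find (fun g => g \in C (val e).2) (Wf e).
Definition Pre e : {set G} := [set g in take (tt e) (Wf e)].
Definition phiM (u : H) : {set G} := C u :|: \bigcup_(e : sedge H | (val e).1 == u) Pre e.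

Lemma C_label u g : g \in C u ->
  exists y d, [/\ (phiv u y <= mm)%N, within (f y) g d & d%:R <= al].
Proof.
case/setU1P => [->|/bigcupP[e _ /bigcupP[p np]]].
  exists (inl u), 0%N; split; [by rewrite /= eqxx| exact: within_refl| exact: al_ge0].
rewrite inE => gi; have [d [w hd]] := seg_within (ltn_ord p) gi.
exists (pt k e p), d; split => //.
case/orP: np => /andP[/eqP <- h].
  by rewrite phi_pt1 ?(ltnW (ltn_ord p)) //; apply: ltnW.
rewrite phi_pt2 ?(ltnW (ltn_ord p)) //; lia.
Qed.

Lemma Pre_label e g : g \in Pre e -> g \notin C (val e).2 /\
  exists p d, [/\ (p < k - mm)%N, within (fp e p) g d & d%:R <= al].
Proof.
rewrite inE => gi; have nC := take_before_find gi; split => //.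
have gW : g \in Wf e by exact: mem_take gi.
have [j [jk gj]] := Wr_mem hk gW; rewrite add0n in gj.
have [d [w hd]] := seg_within jk gj.
exists j, d; split => //; rewrite ltnNge; apply/negP => h.
move/negP: nC; apply; apply: (C_in jk _ gj); by rewrite /near eqxx h orbT.
Qed.

Lemma ptC u : f (inl u) \in C u.
Proof. exact: setU11. Qed.

Lemma C_disj u w g : u != w -> g \in C u -> g \in C w -> False.
Proof.
move=> uw /C_label [y [d [py wy dy]]] /C_label [y' [d' [py' wy' dy']]].
have := phi_sum y' uw => hs.
apply: (gap_false (gap := (k - 2 * mm)%N) (a := u) wy wy' dy dy') => //; last exact: geq_minl.
have := m3; lia.
Qed.

Lemma rank_contra (e e' : sedge H) : (val e).1 = (val e').2 -> (val e).2 = (val e').1 -> False.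
Proof.
move=> h1 h2; case/andP: (valP e) => _; case/andP: (valP e') => _.
rewrite h1 h2; lia.
Qed.

Lemma CPre_disj u e g : u != (val e).1 -> g \in C u -> g \in Pre e -> False.
Proof.
move=> ue gC /Pre_label [nC [p [d [pk w hd]]]].
case: (eqVneq u (val e).2) => [h|ue2]; first by move: nC; rewrite -h gC.
have [y [d' [py wy dy]]] := C_label gC.
apply: (gap_false (gap := (k - 2 * mm)%N) (a := u) wy w dy hd); last exact: geq_minl.
rewrite phi_ptn //; lia.
Qed.

Lemma PrePre_disj e e' g : (val e).1 != (val e').1 -> g \in Pre e -> g \in Pre e' -> False.
Proof.
move=> ne /Pre_label [_ [p [d [pk w hd]]]] /Pre_label [_ [p' [d' [pk' w' hd']]]].
case: (eqVneq (val e').1 (val e).2) => [h|n2].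
  case: (eqVneq (val e).1 (val e').2) => [h'|n2'].
    by apply: (rank_contra (e := e) (e' := e')).
  apply: (gap_false (gap := mm.+1) (a := (val e).1) w w' hd hd'); last exact: geq_minr.
  by rewrite phi_pt1 ?phi_ptn //; lia.
apply: (gap_false (gap := mm.+1) (a := (val e').1) w' w hd' hd); last exact: geq_minr.
rewrite phi_pt1 ?phi_ptn //; [lia| by rewrite eq_sym | lia].
Qed.


Lemma phiM_disj u w : u != w -> [disjoint phiM u & phiM w].
Proof.
move=> uw; rewrite -setI_eq0; apply/eqP/setP => g; rewrite inE in_set0.
apply/negP => /andP[gu gw]; exfalso.
case/setUP: gu => [gCu|/bigcupP[e /eqP eu gPe]];
  case/setUP: gw => [gCw|/bigcupP[e' /eqP ew gPe']].
- exact: C_disj uw gCu gCw.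
- by apply: (CPre_disj (u := u) (e := e') _ gCu gPe'); rewrite ew.
- by apply: (CPre_disj (u := w) (e := e) _ gCw gPe); rewrite eu eq_sym.
- by apply: (PrePre_disj (e := e) (e' := e') _ gPe gPe'); rewrite eu ew.
Qed.

Lemma phiM_conn0 u g : g \in phiM u -> connect (induced (phiM u)) (f (inl u)) g.
Proof.
case/setUP => [gC|/bigcupP[e /eqP eu gP]].
  case/setU1P: gC => [->|/bigcupP[e _ /bigcupP[p np]]]; first exact: connect0.
  rewrite inE => gi; have pk := ltn_ord p; have mk' := mk.
  case/orP: np => /andP[/eqP eu h].
    case/andP: (Wr_path e 0 mm) => pth _.
    have -> : f (inl u) = fp e 0 by rewrite /fp pt0 eu.
    apply: (path_induced pth); first (apply/allP => z zi).
    - have [j [jm zj]] := Wr_mem hm1 zi; rewrite add0n in zj.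
      apply/setUP; left; apply: (C_in (p := j)) zj; first lia.
      by rewrite /near eu eqxx jm.
    - exact: mem_head.
    - by apply: (Wr_sub (j := p)) => //; rewrite add0n.
  case/andP: (Wr_path e (k - mm) mm) => pth _.
  have -> : f (inl u) = fp e (k - mm + mm).
    by rewrite subnK ?(ltnW mk) // /fp ptk // eu.
  apply: (path_induced pth); first (apply/allP => z zi).
  - have [j [jm zj]] := Wr_mem hm1 zi.
    apply/setUP; left; apply: (C_in (p := (k - mm + j)%N)) zj; first lia.
    by rewrite /near eu eqxx leq_addr orbT.
  - exact: Wr_last.
  - apply: (Wr_sub (j := (p - (k - mm))%N)); first lia.
    by rewrite subnKC.
move: gP; rewrite inE; case E: (tt e) => [|n] //.
rewrite /Wf /= => gi.
case/andP: (Wr_path e 0 k) => pth _.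
have -> : f (inl u) = fp e 0 by rewrite /fp pt0 eu.
apply: (path_induced (path_take n pth)); first (apply/allP => z zi).
- apply/setUP; right; apply/bigcupP; exists e; first by rewrite eu.
  by rewrite inE E /Wf.
- exact: mem_head.
- exact: gi.
Qed.

Lemma phiM_conn u x y : x \in phiM u -> y \in phiM u -> connect (induced (phiM u)) x y.
Proof.
move=> xi yi; apply: (connect_trans _ (phiM_conn0 yi)).
by rewrite (sym_connect_sym (@induced_sym _ _)); exact: phiM_conn0.
Qed.

Lemma phiM_adj_e (e : sedge H) : exists x y,
  [/\ x \in phiM (val e).1, y \in phiM (val e).2 & adj x y].
Proof.
case/andP: (Wr_path e 0 k) => pth _.
have := @find_take_adj _ (@adj G) (fun g => g \in C (val e).2) _ _ pth.
case.
- apply/negP => h; apply: (C_disj (sedge_neq e) _ h).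
  by rewrite /fp pt0; exact: ptC.
- have := Wr_last e 0 k; rewrite add0n /fp ptk // => hl.
  have : has (fun g => g \in C (val e).2) (f (pt k e 0) :: Wr e 0 k).
    by apply/hasP; exists (f (inl (val e).2)) => //; exact: ptC.
  rewrite /= => /orP[h|//]; exfalso; apply: (C_disj (sedge_neq e) _ h).
  exact: ptC.
move=> g [h [gi hC gh]]; exists g, h; split => //.
  by apply/setUP; right; apply/bigcupP; exists e => //; rewrite inE.
by apply/setUP; left.
Qed.

Lemma phiM_adj u v : adj u v -> exists x y, [/\ x \in phiM u, y \in phiM v & adj x y].
Proof.
case/edge_of => e /orP[]/andP[/eqP e1 /eqP e2].
  by have := phiM_adj_e e; rewrite e1 e2.
have [x [y [xi yi a]]] := phiM_adj_e e; move: xi yi; rewrite e1 e2 => xi yi.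
by exists y, x; split => //; rewrite adj_sym.
Qed.

Lemma minor_phiM : minor_of H G.
Proof.
exists phiM; split.
- move=> u; apply/set0Pn; exists (f (inl u)); apply/setUP; left; exact: ptC.
- exact: phiM_disj.
- move=> u x y; exact: phiM_conn.
- exact: phiM_adj.
Qed.

End Main.

Local Open Scope ring_scope.


Theorem lemma1 (R : realFieldType) (G H : sgraph) (k : nat)
  (hG : gconnected G) (hH : gconnected H)
  (hminor : ~ minor_of H G) (hk : (1 <= k)%N)
  (f : subdivision H k -> G) (finj : injective f) :
  distortion R f >= k%:R / 6 - 1 / 2.
Proof.
rewrite leNgt; apply/negP => hlt.
have al0 := al_ge0 R f; have be0 := be_ge0 R f.
have D0 : 0 <= distortion R f by exact: mulr_ge0.
have k3 : (3 < k)%N by rewrite -(ltr_nat R); lra.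
have hm1 : (0 < mm k)%N by rewrite /mm; lia.
have hsm : 2 * (expansion R f * contraction R f) <
    (minn (k - 2 * mm k) (mm k).+1)%:R.
  have : (k <= 3 * minn (k - 2 * mm k) (mm k).+1 + 3)%N by rewrite /mm; lia.
  rewrite -(ler_nat R) natrD natrM => h.
  rewrite /distortion in hlt; lra.
exact: hminor (minor_phiM hG hH hk finj hm1 hsm).
Qed.
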